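(* For every formula $\varphi$ of $\mathcal L^{\bigcirc}_\square$ the following are equivalent: (i) $\varphi$ is derivable in $\mathbf{wK4H}$; (ii) $\varphi$ is valid on every finite invertible dynamic $\mathbf{wK4}$ frame; (iii) $\varphi$ is valid, with respect to the $d$-semantics, on every invertible dynamic topological system $\langle X,\tau,f\rangle$ with $X$ finite.
   Context: Language $\mathcal L^{\bigcirc}_\square$: $\varphi::= p\mid \varphi\wedge\varphi\mid\neg\varphi\mid\square\varphi\mid\bigcirc\varphi$, $p$ ranging over a fixed non-empty set $\mathsf{PV}$. Axioms and rules: Taut; K: $\square(\varphi\to\psi)\to(\square\varphi\to\square\psi)$; w4: $\varphi\wedge\square\varphi\to\square\square\varphi$; ${\rm Next}_\neg$: $\neg\bigcirc\varphi\leftrightarrow\bigcirc\neg\varphi$; ${\rm Next}_\wedge$: $\bigcirc(\varphi\wedge\psi)\leftrightarrow\bigcirc\varphi\wedge\bigcirc\psi$; H: $\square\bigcirc\varphi\leftrightarrow\bigcirc\square\varphi$; rules modus ponens, ${\rm Nec}_\square$, ${\rm Nec}_\bigcirc$. $\mathbf{wK4H}$ is axiomatised by Taut, K, w4, ${\rm Next}_\neg$, ${\rm Next}_\wedge$, H, closed under these rules. An invertible dynamic $\mathbf{wK4}$ frame is $\langle W,\sqsubset,f\rangle$ with $W$ non-empty, $\sqsubset$ weakly transitive ($w\sqsubset v\sqsubset u$ and $w\ne u$ imply $w\sqsubset u$), and $f\colon W\to W$ a bijection such that $w\sqsubset v$ iff $f(w)\sqsubset f(v)$. Kripke truth: $w\models\square\varphi$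 iff $v\models\varphi$ for all $v$ with $w\sqsubset v$; $w\models\bigcirc\varphi$ iff $f(w)\models\varphi$; Boolean clauses standard. An invertible DTS is $\langle X,\tau,f\rangle$ with $f\colon X\to X$ a homeomorphism. $d$-semantics: with $d(A)$ the set of $x$ in the closure of $A\setminus\{x\}$, $\|p\|=\nu(p)$, Boolean clauses set-theoretic, $\|\square\varphi\|=X\setminus d(\|\neg\varphi\|)$, $\|\bigcirc\varphi\|=f^{-1}(\|\varphi\|)$. Validity means truth everywhere under every valuation. *)

(* Defs.v *)
From mathcomp Require Import all_boot.
Set Implicit Arguments. Unset Strict Implicit. Unset Printing Implicit Defensive.

Inductive form (PV : Type) : Type :=
| Var : PV -> form PV
| And : form PV -> form PV -> form PV
| Neg : form PV -> form PV
| Box : form PV -> form PV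
| Next : form PV -> form PV.
Arguments Var {PV}. Arguments And {PV}. Arguments Neg {PV}.
Arguments Box {PV}. Arguments Next {PV}.

Definition Imp {PV} (a b : form PV) : form PV := Neg (And a (Neg b)).
Definition Iff {PV} (a b : form PV) : form PV := And (Imp a b) (Imp b a).

(* Propositional tautologies: true under every Boolean valuation in which
   variables, []-formulas and ()-formulas are treated as atoms. *)
Fixpoint peval {PV} (v : form PV -> Prop) (a : form PV) : Prop :=
  match a with
  | Var _ => v a
  | And b c => peval v b /\ peval v c
  | Neg b => ~ peval v b
  | Box _ => v a
  | Next _ => v a
  end.
Definition Taut {PV} (a : form PV) : Prop := forall v, peval v a.

Inductive wK4H {PV : Type} : form PV -> Prop :=
| ax_taut a : Taut a -> wK4H a
| ax_K a b : wK4H (Imp (Box (Imp a b)) (Imp (Box a) (Box b)))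
| ax_w4 a : wK4H (Imp (And a (Box a)) (Box (Box a)))
| ax_next_neg a : wK4H (Iff (Neg (Next a)) (Next (Neg a)))
| ax_next_and a b : wK4H (Iff (Next (And a b)) (And (Next a) (Next b)))
| ax_H a : wK4H (Iff (Box (Next a)) (Next (Box a)))
| r_mp a b : wK4H (Imp a b) -> wK4H a -> wK4H b
| r_nec_box a : wK4H a -> wK4H (Box a)
| r_nec_next a : wK4H a -> wK4H (Next a).

Definition weakly_transitive {W : Type} (R : W -> W -> Prop) : Prop :=
  forall w v u, R w v -> R v u -> w <> u -> R w u.

Definition inv_dyn_wK4_frame {W : Type} (R : W -> W -> Prop) (f : W -> W) : Prop :=
  inhabited W /\ weakly_transitive R /\ bijective f /\
  (forall w v, R w v <-> R (f w) (f v)).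

Fixpoint ksat {PV W : Type} (R : W -> W -> Prop) (f : W -> W)
    (val : PV -> W -> Prop) (a : form PV) (w : W) : Prop :=
  match a with
  | Var p => val p w
  | And b c => ksat R f val b w /\ ksat R f val c w
  | Neg b => ~ ksat R f val b w
  | Box b => forall v, R w v -> ksat R f val b v
  | Next b => ksat R f val b (f w)
  end.

Definition frame_valid {PV W : Type} (R : W -> W -> Prop) (f : W -> W)
    (a : form PV) : Prop :=
  forall (val : PV -> W -> Prop) (w : W), ksat R f val a w.

Definition is_topology {X : Type} (opens : (X -> Prop) -> Prop) : Prop :=
  opens (fun _ => False) /\ opens (fun _ => True) /\
  (forall U V, opens U -> opens V -> opens (fun x => U x /\ V x)) /\
  (forall F : (X -> Prop) -> Prop, (forall U, F U -> opens U) ->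
     opens (fun x => exists U, F U /\ U x)).

Definition continuous_top {X : Type} (opens : (X -> Prop) -> Prop) (f : X -> X) : Prop :=
  forall U, opens U -> opens (fun x => U (f x)).

Definition homeomorphism {X : Type} (opens : (X -> Prop) -> Prop) (f : X -> X) : Prop :=
  exists g : X -> X, cancel f g /\ cancel g f /\
    continuous_top opens f /\ continuous_top opens g.

Definition closure {X : Type} (opens : (X -> Prop) -> Prop) (A : X -> Prop) (x : X) : Prop :=
  forall U, opens U -> U x -> exists y, U y /\ A y.

Definition dset {X : Type} (opens : (X -> Prop) -> Prop) (A : X -> Prop) (x : X) : Prop :=
  closure opens (fun y => A y /\ y <> x) x.

Fixpoint dden {PV X : Type} (opens : (X -> Prop) -> Prop) (f : X -> X)
    (nu : PV -> X -> Prop) (a : form PV) : X -> Prop :=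
  match a with
  | Var p => nu p
  | And b c => fun x => dden opens f nu b x /\ dden opens f nu c x
  | Neg b => fun x => ~ dden opens f nu b x
  | Box b => fun x => ~ dset opens (fun y => ~ dden opens f nu b y) x
  | Next b => fun x => dden opens f nu b (f x)
  end.

Definition dts_valid {PV X : Type} (opens : (X -> Prop) -> Prop) (f : X -> X)
    (a : form PV) : Prop :=
  forall (nu : PV -> X -> Prop) (x : X), dden opens f nu a x.

(* Main.v *)
Require Import Defs.
From mathcomp Require Import all_boot.
From mathcomp Require Import boolp classical_sets.
From Stdlib Require Import Classical.
Set Implicit Arguments. Unset Strict Implicit. Unset Printing Implicit Defensive.

Section Sound.
Variables (PV W : Type) (R : W -> W -> Prop) (f : W -> W) (val : PV -> W -> Prop).

Lemma ksat_Imp a b w : ksat R f val (Imp a b) w <-> (ksat R f val a w -> ksat R f val b w).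
Proof. simpl; split => H. move=> Ha; apply: NNPP => Hb; exact: H. by move=> [Ha Hb]; apply: Hb; apply: H. Qed.

Lemma ksat_Iff a b w : ksat R f val (Iff a b) w <-> (ksat R f val a w <-> ksat R f val b w).
Proof. have h1 := ksat_Imp a b w; have h2 := ksat_Imp b a w; simpl in *; tauto. Qed.

Lemma peval_ksat a w : peval (fun b => ksat R f val b w) a <-> ksat R f val a w.
Proof. elim: a => //= [a IHa b IHb|a IHa]; [rewrite IHa IHb|rewrite IHa]; tauto. Qed.

Hypothesis Rwt : weakly_transitive R.
Hypothesis fb : bijective f.
Hypothesis fR : forall w v, R w v <-> R (f w) (f v).

Lemma soundness a : wK4H a -> forall w, ksat R f val a w.
Proof.
elim => {a}.
- by move=> a Ta w; apply/peval_ksat; apply: Ta.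
- move=> a b w; rewrite !ksat_Imp => H1 H2 v Rv.
  have H3 : ksat R f val (Imp a b) v := H1 v Rv.
  by move: H3; rewrite ksat_Imp; apply; apply: H2.
- move=> x w; rewrite ksat_Imp /= => [[Ha Hb]] v Rwv u Rvu.
  case: (classic (w = u)) => [<-//|ne]; apply: Hb; exact: Rwt Rwv Rvu ne.
- by move=> x w; rewrite ksat_Iff /=.
- by move=> x y w; rewrite ksat_Iff /=.
- move=> x w; rewrite ksat_Iff /=; case: fb => g fK gK; split.
    by move=> H u Ru; rewrite -(gK u); apply: H; rewrite fR gK.
  by move=> H v Rv; apply: H; rewrite -fR.
- by move=> x y _ Hab _ Ha w; move: (Hab w); rewrite ksat_Imp; apply; apply: Ha.
- by move=> x _ Ha w v _; apply: Ha.
- by move=> x _ Ha w; apply: Ha.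
Qed.
End Sound.

Section FrameToSpace.
Variables (PV : Type) (W : finType) (R : W -> W -> Prop) (f : W -> W).
Hypothesis HF : inv_dyn_wK4_frame R f.

Definition okp (x : W * bool) := x.2 = false \/ R x.1 x.1.
Definition lep (x y : W * bool) := x = y \/ (R x.1 y.1 /\ okp x /\ okp y).
Definition opensp (U : W * bool -> Prop) := forall x y, U x -> lep x y -> U y.
Definition fp (x : W * bool) := (f x.1, x.2).

Lemma lep_trans x y z : lep x y -> lep y z -> lep x z.
Proof.
case: HF => _ [wt _].
move=> [<-//|[Rxy [ox oy]]] [<-|[Ryz [_ oz]]]; first by right.
case: (classic (x = z)) => [->|ne]; first by left.
right; split=> //; case: (classic (x.1 = z.1)) => [e|ne1].
  case: x z ne e ox oz {Rxy Ryz oy} => [w i] [v j] /= ne e ox oz; subst v.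
  case: ox => [ei|//]; case: oz => [ej|//]; exfalso; apply: ne.
  by rewrite /= in ei ej; rewrite ei ej.
exact: wt Rxy Ryz ne1.
Qed.

Lemma topo_p : is_topology opensp.
Proof.
split; first by move=> x y.
split; first by move=> x y.
split; first by move=> U V oU oV x y [Ux Vx] l; split; [exact: oU l|exact: oV l].
move=> F HFo x y [U [FU Ux]] l; exists U; split=> //; exact: HFo FU _ _ Ux l.
Qed.

Lemma lep_map (h : W -> W) (hR : forall w v, R w v -> R (h w) (h v)) x y :
  lep x y -> lep (h x.1, x.2) (h y.1, y.2).
Proof.
move=> [->|[Rxy [ox oy]]]; first by left.
right; split; first exact: hR.
by split; [case: ox => [?|?]; [left|right; apply: hR] | case: oy => [?|?]; [left|right; apply: hR]].
Qed.

Lemma homeo_p : homeomorphism opensp fp.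
Proof.
case: HF => _ [_ [[g fK gK] fR]].
have gR w v : R w v -> R (g w) (g v) by rewrite [R (g w) _]fR !gK.
have fR' w v : R w v -> R (f w) (f v) by move/fR.
exists (fun x => (g x.1, x.2)); split; first by case=> w i; rewrite /fp /= fK.
split; first by case=> w i; rewrite /fp /= gK.
split=> U oU x y Ux l.
  by apply: oU Ux _; apply: lep_map.
by apply: oU Ux _; apply: (lep_map gR).
Qed.

Lemma truth_p (val : PV -> W -> Prop) (a : form PV) :
  forall x, okp x -> (dden opensp fp (fun p y => val p y.1) a x <-> ksat R f val a x.1).
Proof.
elim: a => [p|a IHa b IHb|a IHa|a IHa|a IHa] x ox /=.
- by [].
- by rewrite IHa // IHb.
- by rewrite IHa.
- split.
  + move=> nd v Rv; apply: NNPP => nv; apply: nd => U oU Ux.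
    case: (classic (v = x.1)) => [e|ne].
    * exists (x.1, ~~ x.2); have oy : okp (x.1, ~~ x.2) by right; rewrite -{2}e.
      split; first (apply: oU Ux _; right; split; [by rewrite -{2}e|by split]).
      split; last by move=> /(f_equal snd) /=; case: (x.2).
      by rewrite IHa // /= -e.
    * exists (v, false); have oy : okp (v, false) by left.
      split; first (apply: oU Ux _; right; split; [by []|by split]).
      split; last by case=> e; apply: ne; rewrite -e.
      by rewrite IHa.
  + move=> H nd.
    have [y [l [ny ne]]] := nd (lep x) (fun y z l1 l2 => lep_trans l1 l2) (or_introl erefl).
    case: l => [e|[Rxy [_ oy]]]; first by apply: ne; rewrite e.
    by apply: ny; rewrite IHa //; apply: H.
- rewrite IHa //; case: HF => _ [_ [_ fR]]; case: ox => [h|h]; [by left|by right; rewrite /= -fR].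
Qed.

End FrameToSpace.

Lemma iii_to_ii (PV : Type) (phi : form PV) :
  (forall (X : finType) (opens : (X -> Prop) -> Prop) (f : X -> X),
      is_topology opens -> homeomorphism opens f -> dts_valid opens f phi) ->
  (forall (W : finType) (R : W -> W -> Prop) (f : W -> W),
      inv_dyn_wK4_frame R f -> frame_valid R f phi).
Proof.
move=> H W R f HF val w.
have := H _ _ _ (@topo_p W R) (@homeo_p W R f HF) (fun p y => val p y.1) (w, false).
by rewrite (truth_p HF) //; left.
Qed.

Section SpaceToFrame.
Variables (PV : Type) (X : finType) (opens : (X -> Prop) -> Prop) (f : X -> X).
Hypothesis Htop : is_topology opens.
Hypothesis Hhom : homeomorphism opens f.

Definition Rs (x y : X) := y <> x /\ forall U, opens U -> U x -> U y.

Lemma minnbhd x : exists U, opens U /\ U x /\ forall y, U y -> forall V, opens V -> V x -> V y.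
Proof.
case: Htop => _ [oT [oI _]].
suff: forall l : seq X, exists U, opens U /\ U x /\
        forall y, y \in l -> U y -> forall V, opens V -> V x -> V y.
  case/(_ (enum X)) => U [oU [Ux HU]]; exists U; split=> //; split=> // y Uy.
  by apply: HU Uy; rewrite mem_enum.
elim=> [|y l [U [oU [Ux HU]]]].
  by exists (fun _ => True); split=> //; split.
case: (classic (forall V, opens V -> V x -> V y)) => [Hy|].
  exists U; split=> //; split=> // z; rewrite inE => /orP[/eqP->|zl] //.
  exact: HU.
move=> /not_all_ex_not [V nV].
have oV : opens V by apply: NNPP => h; apply: nV => o; case: (h o).
have Vx : V x by apply: NNPP => h; apply: nV => _ v; case: (h v).
have nVy : ~ V y by move=> h; apply: nV.
exists (fun z => U z /\ V z); split; first exact: oI.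
split=> // z; rewrite inE => /orP[/eqP->|zl] [Uz Vz] //.
exact: HU.
Qed.

Lemma frame_s (x0 : X) : inv_dyn_wK4_frame Rs f.
Proof.
case: Hhom => g [fK [gK [cf cg]]].
have finj : injective f by apply: can_inj fK.
split; first by constructor.
split.
  move=> x y z [nyx Hxy] [nzy Hyz] nxz; split; first by move=> e; apply: nxz.
  by move=> U oU Ux; apply: Hyz oU (Hxy U oU Ux).
split; first by exists g.
move=> x y; split.
  move=> [nyx Hxy]; split; first by move/finj.
  by move=> V oV Vfx; apply: (Hxy (fun z => V (f z))) => //; apply: cf.
move=> [nyx Hxy]; split; first by move=> e; apply: nyx; rewrite e.
move=> V oV Vx; have := Hxy (fun z => V (g z)) (cg _ oV); rewrite !fK; exact.
Qed.

Lemma truth_s (nu : PV -> X -> Prop) (a : form PV) :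
  forall x, ksat Rs f nu a x <-> dden opens f nu a x.
Proof.
elim: a => [p|a IHa b IHb|a IHa|a IHa|a IHa] x /=.
- by [].
- by rewrite IHa IHb.
- by rewrite IHa.
- split.
  + move=> H nd; have [U [oU [Ux HU]]] := minnbhd x.
    have [y [Uy [ny ne]]] := nd U oU Ux.
    apply: ny; rewrite -IHa; apply: H; split=> //; exact: HU.
  + move=> nd y [nyx Hxy]; apply: NNPP => ny; apply: nd => U oU Ux.
    exists y; split; first exact: Hxy.
    by split=> //; rewrite -IHa.
- by rewrite IHa.
Qed.

End SpaceToFrame.

Lemma ii_to_iii (PV : Type) (phi : form PV) :
  (forall (W : finType) (R : W -> W -> Prop) (f : W -> W),
      inv_dyn_wK4_frame R f -> frame_valid R f phi) ->
  (forall (X : finType) (opens : (X -> Prop) -> Prop) (f : X -> X),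
      is_topology opens -> homeomorphism opens f -> dts_valid opens f phi).
Proof.
move=> H X opens f Ht Hh nu x.
rewrite -(@truth_s PV X opens f Ht); apply: H; exact: (@frame_s X opens f Hh x).
Qed.

Fixpoint sub {A : Type} (a : form A) : seq (form A) :=
  match a with
  | Var _ => [:: a]
  | And b c => a :: (sub b ++ sub c)
  | Neg b => a :: sub b
  | Box b => a :: sub b
  | Next b => a :: sub b
  end.

Definition inl_ {T : Type} (x : T) (s : seq T) := exists2 i, i < size s & forall d, nth d s i = x.

Lemma inl_cons T (x y : T) s : inl_ x (y :: s) <-> x = y \/ inl_ x s.
Proof.
split.
  by case=> [[|i]] /= lt H; [left; rewrite -(H y)|right; exists i => // d; apply: H].
case=> [->|[i lt H]]; first by exists 0.
by exists i.+1.
Qed.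

Lemma inl_cat T (x : T) s t : inl_ x (s ++ t) <-> inl_ x s \/ inl_ x t.
Proof.
elim: s => [|y s IH] /=; first by split; [right|case=> // [[i]]].
rewrite !inl_cons IH; tauto.
Qed.

Lemma sub_self A (a : form A) : inl_ a (sub a).
Proof. by case: a => *; apply/inl_cons; left. Qed.

Lemma sub_trans A (a b c : form A) : inl_ b (sub a) -> inl_ c (sub b) -> inl_ c (sub a).
Proof.
elim: a b => [p|a1 IH1 a2 IH2|a1 IH1|a1 IH1|a1 IH1] b /= Hb Hc.
- by case/inl_cons: Hb => [e|[i lt _]]; [subst b|rewrite ltn0 in lt].
- case/inl_cons: Hb => [e|/inl_cat [H|H]]; [by subst b| |]; apply/inl_cons; right; apply/inl_cat;
    [left; exact: IH1 H Hc|right; exact: IH2 H Hc].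
- by case/inl_cons: Hb => [e|H]; [subst b|apply/inl_cons; right; exact: IH1 H Hc].
- by case/inl_cons: Hb => [e|H]; [subst b|apply/inl_cons; right; exact: IH1 H Hc].
- by case/inl_cons: Hb => [e|H]; [subst b|apply/inl_cons; right; exact: IH1 H Hc].
Qed.

Section Filt.
Variables (A W : Type) (R : W -> W -> Prop) (val : A -> W -> Prop).
Hypothesis Rwt : weakly_transitive R.
Variable psi0 : form A.

Definition Sg := sub psi0.
Definition n := size Sg.
Definition nf (i : 'I_n) := nth psi0 Sg i.
Definition inS (a : form A) := exists i : 'I_n, nf i = a.

Lemma inS_inl a : inS a <-> inl_ a Sg.
Proof.
split; first by case=> i <-; exists i => // d; rewrite /nf; apply: set_nth_default.
by case=> i lt H; exists (Ordinal lt); rewrite /nf H.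
Qed.

Lemma inS_sub a b : inS a -> inl_ b (sub a) -> inS b.
Proof. by rewrite !inS_inl => H1 H2; apply: sub_trans H1 H2. Qed.

Lemma inS_and a b : inS (And a b) -> inS a /\ inS b.
Proof.
move=> H; split; apply: (inS_sub H) => /=; rewrite inl_cons inl_cat; right;
  [left|right]; apply: sub_self.
Qed.
Lemma inS_neg a : inS (Neg a) -> inS a.
Proof. by move=> H; apply: (inS_sub H) => /=; rewrite inl_cons; right; apply: sub_self. Qed.
Lemma inS_box a : inS (Box a) -> inS a.
Proof. by move=> H; apply: (inS_sub H) => /=; rewrite inl_cons; right; apply: sub_self. Qed.
Lemma inS_next a : inS (Next a) -> inS a.
Proof. by move=> H; apply: (inS_sub H) => /=; rewrite inl_cons; right; apply: sub_self. Qed.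
Lemma inS_psi0 : inS psi0.
Proof. by apply/inS_inl; apply: sub_self. Qed.

Definition TY := {ffun 'I_n -> bool}.
Definition sat a x := ksat R id val a x.
Definition ty (x : W) : TY := [ffun i => `[< sat (nf i) x >]].
Lemma tyE x i : ty x i <-> sat (nf i) x.
Proof. by rewrite ffunE; split => /asboolP. Qed.

Definition Rq x y := x = y \/ R x y.
Definition clu x y := Rq x y /\ Rq y x.
Definition above x z := Rq x z /\ ~ Rq z x.
Lemma Rq_trans x y z : Rq x y -> Rq y z -> Rq x z.
Proof.
move=> [<-//|Rxy] [<-|Ryz]; [by right| ].
case: (classic (x = z)) => [->|ne]; [by left|right; exact: Rwt Rxy Ryz ne].
Qed.
Lemma Rq_refl x : Rq x x. Proof. by left. Qed.

Definition TS (x : W) : {set TY} := [set T | `[< exists y, clu x y /\ ty y = T >]].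
Definition Ab (x : W) : TY := [ffun i => `[< forall z, above x z -> sat (nf i) z >]].
Definition Data := (TY * ({set TY} * TY))%type.
Definition dat x : Data := (ty x, (TS x, Ab x)).
Definition sq (s t : {set TY} * TY) :=
  (forall i, s.2 i -> t.2 i) /\ (forall S, S \in t.1 -> forall i, s.2 i -> S i).
Definition le (d e : Data) := d.2 = e.2 \/ sq d.2 e.2.
Definition reflT (T : TY) := forall i j : 'I_n, nf i = Box (nf j) -> T i -> T j.
Definition R' (d e : Data) := (exists z, e = dat z) /\ le d e /\ (d <> e \/ reflT d.1).
Definition val' (a : A) (d : Data) := exists i, nf i = Var a /\ d.1 i.

Lemma R'_wt : weakly_transitive R'.
Proof.
move=> d e g [_ [le1 _]] [rg [le2 _]] ne; split=> //; split; last by left.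
rewrite /le; case: le1 => [e1|[s1 s2]]; case: le2 => [e2|[t1 t2]].
- by left; rewrite e1 e2.
- by right; rewrite e1.
- by right; rewrite -e2.
right; split=> [i h|S HS i h]; first by apply: t1; apply: s1.
by apply: t2 HS _ _; apply: s1.
Qed.

Lemma clu_TS x y : clu x y -> TS x = TS y.
Proof.
move=> [xy yx]; apply/setP => T; rewrite !inE; apply: asbool_equiv_eq.
split=> -[z [[h1 h2] e]]; exists z; split=> //; split.
- exact: Rq_trans yx h1.
- exact: Rq_trans h2 xy.
- exact: Rq_trans xy h1.
- exact: Rq_trans h2 yx.
Qed.

Lemma clu_Ab x y : clu x y -> Ab x = Ab y.
Proof.
move=> [xy yx]; apply/ffunP => i; rewrite !ffunE; apply: asbool_equiv_eq.
split=> H z [h1 h2]; apply: H; split.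
- exact: Rq_trans xy h1.
- by move=> h; apply: h2; apply: Rq_trans h xy.
- exact: Rq_trans yx h1.
- by move=> h; apply: h2; apply: Rq_trans h yx.
Qed.

Lemma truth (a : form A) : inS a -> forall x, ksat R' id val' a (dat x) <-> sat a x.
Proof.
elim: a => [p|a IHa b IHb|a IHa|a IHa|a IHa] Ha x.
- rewrite /= /val' /sat /=; split.
    by case=> i [ei]; rewrite tyE ei.
  by move=> h; case: Ha => i ei; exists i; split=> //; rewrite tyE ei.
- case: (inS_and Ha) => Ha1 Hb1; rewrite /sat /=.
  by rewrite (IHa Ha1) (IHb Hb1).
- by rewrite /sat /= (IHa (inS_neg Ha)).
- have Ha1 := inS_box Ha; case: Ha => i ei; case: Ha1 => j ej.
  rewrite /sat /=; split.
  + move=> H y Rxy; rewrite -/(sat a y) -(IHa (ex_intro _ j ej)); apply: H.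
    split; first by exists y.
    split.
      case: (classic (Rq y x)) => [yx|nyx].
        by left; rewrite /dat /= (clu_TS (conj (or_intror Rxy) yx)) (clu_Ab (conj (or_intror Rxy) yx)).
      right; split=> /= [k|S]; rewrite ?ffunE.
        move=> /asboolP Hk; apply/asboolP => z [yz nzy]; apply: Hk; split.
          exact: Rq_trans (or_intror Rxy) yz.
        by move=> zx; apply: nzy; apply: Rq_trans zx (or_intror Rxy).
      rewrite inE => /asboolP [z [[yz zy] <-]] k; rewrite ffunE => /asboolP Hk; apply/tyE; apply: Hk; split.
        exact: Rq_trans (or_intror Rxy) yz.
      by move=> zx; apply: nyx; apply: Rq_trans yz zx.
    case: (classic (dat x = dat y)) => [e|]; [right|by left].
    move=> k l ekl /tyE; rewrite ekl => Hb.
    have ety : ty x = ty y by exact: (f_equal fst e).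
    rewrite /= ety; apply/tyE; exact: Hb y Rxy.
  + move=> H e [[z ->] [lexz hr]]; rewrite (IHa (ex_intro _ j ej)).
    have Hi : ty x i by apply/tyE; rewrite ei.
    have eij : nf i = Box (nf j) by rewrite ei ej.
    have tz : ty z \in TS z by rewrite inE; apply/asboolP; exists z; split=> //; split; left.
    case: lexz => [eq|[s1 s2]]; last first.
      have Abxj : Ab x j.
        rewrite ffunE; apply/asboolP => w [xw nwx]; rewrite ej; apply: H.
        by case: xw => // ew; case: nwx; rewrite ew; left.
      by move: (s2 _ tz j Abxj) => /tyE; rewrite ej.
    have eTS : TS x = TS z by exact: (f_equal fst eq).
    move: tz; rewrite -eTS inE => /asboolP [y [[xy yx] ety]].
    case: (classic (y = x)) => [eyx|nyx].
      have exz : dat x = dat z by rewrite /dat -{1}eyx ety; congr pair; exact: eq.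
      have etyxz : ty x = ty z := f_equal fst exz.
      case: hr => [//|rf]; move: (rf i j eij Hi); rewrite /= etyxz => /tyE.
      by rewrite ej.
    case: xy => [exy|Rxy]; first by case: nyx.
    have := H y Rxy; rewrite -ej => /tyE; rewrite ety => /tyE; by [].
- by rewrite /sat /= (IHa (inS_next Ha)).
Qed.

Lemma filtration x0 : ~ sat psi0 x0 ->
  exists (F : finType) (R2 : F -> F -> Prop) (val2 : A -> F -> Prop) (d0 : F),
    weakly_transitive R2 /\ ~ ksat R2 id val2 psi0 d0.
Proof.
move=> H; exists (Data : finType), R', val', (dat x0); split; first exact: R'_wt.
by rewrite (truth inS_psi0).
Qed.
End Filt.

Fixpoint emb {PV : Type} (a : form (nat * PV)) : form PV :=
  match a with
  | Var kp => iter kp.1 Next (Var kp.2)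
  | And b c => And (emb b) (emb c)
  | Neg b => Neg (emb b)
  | Box b => Box (emb b)
  | Next b => Next (emb b)
  end.

Fixpoint nxfree {A : Type} (a : form A) : Prop :=
  match a with
  | Var _ => True
  | And b c => nxfree b /\ nxfree c
  | Neg b => nxfree b
  | Box b => nxfree b
  | Next _ => False
  end.

Fixpoint bnd {PV : Type} (B : nat) (a : form (nat * PV)) : Prop :=
  match a with
  | Var kp => kp.1 <= B
  | And b c => bnd B b /\ bnd B c
  | Neg b => bnd B b
  | Box b => bnd B b
  | Next b => bnd B b
  end.

Lemma ksat_iter PV W (R : W -> W -> Prop) f (val : PV -> W -> Prop) k a x :
  ksat R f val (iter k Next a) x <-> ksat R f val a (iter k f x).
Proof. by elim: k x => [|k IH] x //=; rewrite IH -iterSr. Qed.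

Section Layer.
Variables (PV : Type) (F : finType) (R : F -> F -> Prop) (V : nat * PV -> F -> Prop).
Hypothesis Rwt : weakly_transitive R.
Variable B : nat.

Definition W2 := (F * 'I_B.+1)%type.
Definition R2 (x y : W2) := R x.1 y.1 /\ x.2 = y.2.
Definition f2 (x : W2) : W2 := (x.1, ordS x.2).
Definition val2 (p : PV) (x : W2) := V (nat_of_ord x.2, p) x.1.

Lemma iter_f2 k x : iter k f2 x = (x.1, iter k (@ordS _) x.2).
Proof. by elim: k => [|k IH] /=; [case: x|rewrite IH]. Qed.

Lemma iter_ordS k : nat_of_ord (iter k (@ordS B.+1) ord0) = k %% B.+1.
Proof.
elim: k => [|k IH] /=; first by rewrite mod0n.
by rewrite IH -addn1 modnDml addn1.
Qed.

Lemma frame2 (w0 : F) : inv_dyn_wK4_frame R2 f2.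
Proof.
split; first by constructor; exact: (w0, ord0).
split.
  move=> [w i] [v j] [u k] [Rwv /= eij] [Rvu /= ejk] ne; split=> /=; last by rewrite eij.
  have ne' : w <> u by move=> ewu; apply: ne; rewrite ewu eij ejk.
  exact: Rwt Rwv Rvu ne'.
split; first by exists (fun x => (x.1, ord_pred x.2)) => [[w i]|[w i]]; rewrite /f2 /= ?ordSK ?ord_predK.
move=> [w i] [v j]; rewrite /R2 /f2 /=; split=> [[h ->]//|[h /ordS_inj ->]] //.
Qed.

Lemma layer_truth (a : form (nat * PV)) : nxfree a -> bnd B a ->
  forall w, ksat R2 f2 val2 (emb a) (w, ord0) <-> ksat R id V a w.
Proof.
elim: a => [[k p]|a IHa b IHb|a IHa|a IHa|a IHa] //= Hn Hb w.
- rewrite ksat_iter iter_f2 /= /val2 /= iter_ordS modn_small //; by rewrite ltnS.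
- by case: Hn => ??; case: Hb => ??; rewrite IHa // IHb.
- by rewrite IHa.
- split=> H v Rv.
    by rewrite -IHa //; apply: H; split.
  by case: v Rv => v j [Rv /= <-]; rewrite IHa //; apply: H.
Qed.
End Layer.

Fixpoint allP {T : Type} (P : T -> Prop) (l : seq T) : Prop :=
  match l with [::] => True | a :: l => P a /\ allP P l end.

Lemma allP_mono T (P Q : T -> Prop) l : (forall a, P a -> Q a) -> allP P l -> allP Q l.
Proof. by move=> H; elim: l => //= a l IH [? ?]; split; [apply: H|apply: IH]. Qed.

Lemma allP_filter T (P : T -> Prop) l : allP P (filter (fun b => `[< P b >]) l).
Proof. by elim: l => //= a l IH; case: asboolP => //= h; split. Qed.

Section Logic.
Variables (PV : Type) (p0 : PV).
Local Notation form := (form PV).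
Local Notation der := (@wK4H PV).

Definition top : form := Neg (And (Var p0) (Neg (Var p0))).
Definition Or (a b : form) : form := Neg (And (Neg a) (Neg b)).
Definition conj (l : seq form) : form := foldr And top l.

Lemma peval_imp v (a b : form) : peval v (Imp a b) <-> (peval v a -> peval v b).
Proof. rewrite /=; split=> H; [move=> ha; apply: NNPP => hb; exact: H|by case=> /H]. Qed.

Lemma peval_top v : peval v top.
Proof. by rewrite /=; case. Qed.

Lemma peval_conj v l : peval v (conj l) <-> allP (peval v) l.
Proof.
elim: l => [|a l IH] /=; first by split=> // _; exact: peval_top.
by rewrite -IH.
Qed.

Lemma allP_cat T (P : T -> Prop) l m : allP P (l ++ m) <-> allP P l /\ allP P m.
Proof. elim: l => [|a l IH] /=; [tauto|rewrite IH; tauto]. Qed.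

Lemma conj_split v (q : pred form) l a :
  allP (fun b => q b \/ b = a) l -> peval v (conj (filter q l)) -> peval v a ->
  peval v (conj l).
Proof.
rewrite !peval_conj; elim: l => //= b l IH [hb hl]; case: ifP => qb /=.
  by move=> [pb pl] pa; split=> //; apply: IH.
by move=> pl pa; case: hb => [qb'|->]; [rewrite qb' in qb|split=> //; apply: IH].
Qed.

Lemma taut_mp a b : Taut (Imp a b) -> der a -> der b.
Proof. by move=> T Ha; apply: r_mp Ha; apply: ax_taut. Qed.
Lemma taut_mp2 a b c : Taut (Imp a (Imp b c)) -> der a -> der b -> der c.
Proof. by move=> T Ha Hb; apply: r_mp (taut_mp T Ha) Hb. Qed.
Lemma taut_mp3 a b c d : Taut (Imp a (Imp b (Imp c d))) -> der a -> der b -> der c -> der d.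
Proof. by move=> T Ha Hb Hc; apply: r_mp (taut_mp2 T Ha Hb) Hc. Qed.

Ltac ptaut := let v := fresh "v" in intro v; rewrite ?peval_imp /=;
  repeat match goal with
  | |- context [peval v ?x] => lazymatch goal with
      | H : peval v x |- _ => fail | H : ~ peval v x |- _ => fail
      | _ => destruct (classic (peval v x)) end
  | |- context [v ?x] => lazymatch goal with
      | H : v x |- _ => fail | H : ~ v x |- _ => fail
      | _ => destruct (classic (v x)) end
  end; tauto.

Lemma der_and a b : der a -> der b -> der (And a b).
Proof. by move=> Ha Hb; apply: (taut_mp2 _ Ha Hb); ptaut. Qed.
Lemma iff_refl a : der (Iff a a).
Proof. by apply: ax_taut; ptaut. Qed.
Lemma iff_sym a b : der (Iff a b) -> der (Iff b a).
Proof. by move=> H; apply: (taut_mp _ H); ptaut. Qed.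
Lemma iff_trans a b c : der (Iff a b) -> der (Iff b c) -> der (Iff a c).
Proof. by move=> H1 H2; apply: (taut_mp2 _ H1 H2); ptaut. Qed.
Lemma iff_imp a b : der (Iff a b) -> der (Imp a b).
Proof. by move=> H; apply: (taut_mp _ H); ptaut. Qed.
Lemma iff_and a a' b b' : der (Iff a a') -> der (Iff b b') -> der (Iff (And a b) (And a' b')).
Proof. by move=> H1 H2; apply: (taut_mp2 _ H1 H2); ptaut. Qed.
Lemma iff_neg a a' : der (Iff a a') -> der (Iff (Neg a) (Neg a')).
Proof. by move=> H; apply: (taut_mp _ H); ptaut. Qed.
Lemma imp_iff a b : der (Imp a b) -> der (Imp b a) -> der (Iff a b).
Proof. by move=> H1 H2; apply: (taut_mp2 _ H1 H2); ptaut. Qed.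
Lemma imp_trans a b c : der (Imp a b) -> der (Imp b c) -> der (Imp a c).
Proof. by move=> H1 H2; apply: (taut_mp2 _ H1 H2); ptaut. Qed.

Lemma box_mono a b : der (Imp a b) -> der (Imp (Box a) (Box b)).
Proof. by move=> H; apply: r_mp (ax_K a b) (r_nec_box H). Qed.

Lemma iff_box a b : der (Iff a b) -> der (Iff (Box a) (Box b)).
Proof.
move=> H; apply: imp_iff; apply: box_mono; [exact: iff_imp|apply: iff_imp; exact: iff_sym].
Qed.

Lemma next_mono a b : der (Imp a b) -> der (Imp (Next a) (Next b)).
Proof.
move=> H; have H1 := r_nec_next H.
have H2 := der_and (der_and (ax_next_neg (And a (Neg b))) (ax_next_and a (Neg b))) (ax_next_neg b).
by apply: (taut_mp2 _ H1 H2); ptaut.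
Qed.

Lemma iff_next a b : der (Iff a b) -> der (Iff (Next a) (Next b)).
Proof.
move=> H; apply: imp_iff; apply: next_mono; [exact: iff_imp|apply: iff_imp; exact: iff_sym].
Qed.


Definition cons (G : form -> Prop) := forall l, allP G l -> ~ der (Neg (conj l)).
Definition mcs (G : form -> Prop) := cons G /\ forall a, cons (fun b => G b \/ b = a) -> G a.

Lemma cons_mono (G G' : form -> Prop) : (forall b, G' b -> G b) -> cons G -> cons G'.
Proof. by move=> H cG l hl; apply: cG; apply: allP_mono hl. Qed.

Lemma filter_split (G : form -> Prop) a l v :
  allP (fun b => G b \/ b = a) l ->
  peval v (conj (filter (fun b => `[< G b >]) l)) -> peval v a -> peval v (conj l).
Proof.
move=> H; apply: conj_split; apply: allP_mono H => b [h|->]; [left; exact/asboolP|by right].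
Qed.

Section MCS.
Variable G : form -> Prop.
Hypothesis HG : mcs G.

Lemma mcs_clos l b : allP G l -> der (Imp (conj l) b) -> G b.
Proof.
move=> hl hd; apply: HG.2 => l2 hl2 hn.
set l2' := filter (fun c => `[< G c >]) l2.
apply: (HG.1 (l ++ l2')); first by apply/allP_cat; split=> //; exact: allP_filter.
apply: (taut_mp2 _ hd hn) => v; rewrite !peval_imp /= => h1 h2 h3.
move: h3; rewrite peval_conj allP_cat -!peval_conj => -[c1 c2]; apply: h2.
by apply: (filter_split hl2 c2); apply: h1.
Qed.

Lemma mcs_der b : der b -> G b.
Proof. by move=> h; apply: (@mcs_clos [::]) => //; apply: (taut_mp _ h); ptaut. Qed.

Lemma mcs_neg a : G (Neg a) <-> ~ G a.
Proof.
split.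
  move=> hn ha; apply: (HG.1 [:: a; Neg a]) => //; apply: ax_taut; ptaut.
move=> na; apply: HG.2 => l hl hn; apply: na.
set l' := filter (fun c => `[< G c >]) l.
apply: (@mcs_clos l'); first exact: allP_filter.
apply: (taut_mp _ hn) => v; rewrite !peval_imp /= => h1 h2; apply: NNPP => h3; apply: h1.
exact: (filter_split hl h2).
Qed.

Lemma mcs_and a b : G (And a b) <-> G a /\ G b.
Proof.
split.
  move=> h; split; apply: (@mcs_clos [:: And a b]) => //; apply: ax_taut; ptaut.
by case=> ha hb; apply: (@mcs_clos [:: a; b]) => //; apply: ax_taut; ptaut.
Qed.

Lemma mcs_mp a b : G (Imp a b) -> G a -> G b.
Proof. by move=> h1 h2; apply: (@mcs_clos [:: Imp a b; a]) => //; apply: ax_taut; ptaut. Qed.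

End MCS.

Lemma lindenbaum (S : form -> Prop) : cons S -> exists G, mcs G /\ forall a, S a -> G a.
Proof.
move=> cS.
pose P := fun A : set form => cons (fun b => S b \/ A b).
have [A [PA maxA]] : exists A, P A /\ forall B, proper A B -> ~ P B.
  apply: Zorn_bigcup => F FP Ftot l hl.
  suff [X [FX hX]] : exists X, (F X \/ X = set0) /\ allP (fun b => S b \/ X b) l.
    case: FX => [FX|eX]; first exact: (FP _ FX l hX).
    by apply: (cons_mono _ cS) hX => b [//|]; rewrite eX; case.
  elim: l hl => [|b l IH] /=; first by move=> _; exists set0; split; [right|].
  case=> hb /IH [X [FX hX]].
  case: hb => [Sb|[Y FY Yb]]; first by exists X; split=> //; split=> //; left.
  case: FX => [FX|eX]; last first.
    exists Y; split; first by left.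
    split; first by right.
    by apply: allP_mono hX => c [|]; [left|rewrite eX].
  case: (Ftot X Y FX FY) => [XY|YX].
    exists Y; split; first by left.
    by split; [right|apply: allP_mono hX => c [|/XY]; [left|right]].
  exists X; split; first by left.
  by split; [right; apply: YX|].
exists (fun b => S b \/ A b); split; last by move=> a; left.
split=> // a ca; apply: NNPP => na.
apply: (maxA (fun b => A b \/ b = a)).
  split; first by move=> b; left.
  by move=> h; apply: na; right; apply: h; right.
by apply: (cons_mono _ ca) => b [|[|]]; [left; left|left; right|right].
Qed.


Lemma box_and a b : der (Imp (And (Box a) (Box b)) (Box (And a b))).
Proof.
have h1 : der (Box (Imp a (Imp b (And a b)))) by apply: r_nec_box; apply: ax_taut; ptaut.
have h2 := ax_K a (Imp b (And a b)).
have h3 := ax_K b (And a b).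
by apply: (taut_mp3 _ h1 h2 h3); ptaut.
Qed.

Lemma box_conj l : der (Imp (conj (map Box l)) (Box (conj l))).
Proof.
elim: l => [|a l IH] /=.
  have h : der (Box top) by apply: r_nec_box; apply: ax_taut; ptaut.
  by apply: (taut_mp _ h); ptaut.
by apply: (taut_mp2 _ IH (box_and a (conj l))); ptaut.
Qed.

Definition Wc := {G : form -> Prop | mcs G}.
Definition Rc (G D : Wc) := forall a, sval G (Box a) -> sval D a.
Definition valc (kp : (nat * PV)%type) (G : Wc) := sval G (emb (Var kp)).

Lemma Wc_eq (G D : Wc) : (forall a, sval G a -> sval D a) -> G = D.
Proof.
case: G D => [G mG] [D mD] /= H.
have e : G = D.
  apply: funext => a; apply: propext; split; first exact: H.
  move=> Da; apply: NNPP => nGa; have := H _ ((mcs_neg mG a).2 nGa).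
  by rewrite (mcs_neg mD).
exact: eq_exist.
Qed.

Lemma Rc_wt : weakly_transitive Rc.
Proof.
move=> [G mG] [D mD] [E mE] /= RGD RDE ne a Ga /=.
have [t [Gt nEt]] : exists t, G t /\ ~ E t.
  apply: NNPP => h; apply: ne; apply: Wc_eq => /= b Gb; apply: NNPP => nEb; apply: h.
  by exists b.
pose al := Or a t.
have Gal : G al by apply: (@mcs_clos _ mG [:: t]) => //; apply: ax_taut; ptaut.
have Gbal : G (Box al).
  apply: (mcs_mp mG _ Ga); apply: mcs_der => //; apply: box_mono; apply: ax_taut; ptaut.
have Gbbal : G (Box (Box al)).
  by apply: (mcs_mp mG (mcs_der mG (ax_w4 al))); apply/(mcs_and mG).
have Eal := RDE _ (RGD _ Gbbal).
have Ent := (mcs_neg mE t).2 nEt.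
by apply: (@mcs_clos _ mE [:: al; Neg t]) => //; apply: ax_taut; ptaut.
Qed.

Lemma exist_lemma (G : Wc) a : ~ sval G (Box a) -> exists D : Wc, Rc G D /\ ~ sval D a.
Proof.
case: G => G mG /= nG.
pose S := fun b => G (Box b) \/ b = Neg a.
have cS : cons S.
  move=> l hl hn; apply: nG.
  set l' := filter (fun c => `[< G (Box c) >]) l.
  have h1 : der (Imp (conj l') a).
    apply: (taut_mp _ hn) => v; rewrite !peval_imp /= => h1 h2; apply: NNPP => h3; apply: h1.
    exact: (filter_split hl h2).
  apply: (@mcs_clos _ mG (map Box l')).
    have am : forall m, allP (fun c => G (Box c)) m -> allP G (map Box m).
      by elim=> //= c m IH [? ?]; split=> //; apply: IH.
    by apply: am; exact: allP_filter.
  exact: imp_trans (box_conj l') (box_mono h1).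
have [D [mD SD]] := lindenbaum cS.
exists (exist _ D mD); split=> /=.
  by move=> b Gb; apply: SD; left.
by apply/(mcs_neg mD); apply: SD; right.
Qed.

Lemma canon_truth (a : Defs.form (nat * PV)%type) : nxfree a ->
  forall G : Wc, ksat Rc id valc a G <-> sval G (emb a).
Proof.
elim: a => [kp|a IHa b IHb|a IHa|a IHa|a IHa] //= Hn G.
- by case: Hn => h1 h2; rewrite IHa // IHb // (mcs_and (svalP G)).
- by rewrite IHa // (mcs_neg (svalP G)).
- split.
    move=> H; apply: NNPP => nG; have [D [RGD nD]] := exist_lemma nG.
    by apply: nD; rewrite -IHa //; apply: H.
  by move=> H D RGD; rewrite IHa //; apply: RGD.
Qed.

Fixpoint Nf (a : form) (k : nat) : Defs.form (nat * PV)%type :=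
  match a with
  | Var p => Var (k, p)
  | And b c => And (Nf b k) (Nf c k)
  | Neg b => Neg (Nf b k)
  | Box b => Box (Nf b k)
  | Next b => Nf b k.+1
  end.

Fixpoint nd (a : form) : nat :=
  match a with
  | Var _ => 0
  | And b c => maxn (nd b) (nd c)
  | Neg b => nd b
  | Box b => nd b
  | Next b => (nd b).+1
  end.

Lemma Nf_nxfree a k : nxfree (Nf a k).
Proof. by elim: a k => //= b IHb c IHc k; split. Qed.

Lemma bnd_mono (B B' : nat) (a : Defs.form (nat * PV)%type) : B <= B' -> bnd B a -> bnd B' a.
Proof.
move=> le; elim: a => //= [kp|b IHb c IHc]; first by move=> h; apply: leq_trans h le.
by case=> ??; split; [apply: IHb|apply: IHc].
Qed.

Lemma Nf_bnd a k : bnd (k + nd a) (Nf a k).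
Proof.
elim: a k => //= [p|b IHb c IHc|b IHb] k; first by rewrite addn0.
  split; [apply: bnd_mono (IHb k)|apply: bnd_mono (IHc k)]; by rewrite leq_add2l ?leq_maxl ?leq_maxr.
by rewrite addnS -addSn.
Qed.

Lemma nx_and k a b : der (Iff (iter k Next (And a b)) (And (iter k Next a) (iter k Next b))).
Proof.
elim: k => [|k IH] /=; first exact: iff_refl.
exact: iff_trans (iff_next IH) (ax_next_and _ _).
Qed.

Lemma nx_neg k a : der (Iff (iter k Next (Neg a)) (Neg (iter k Next a))).
Proof.
elim: k => [|k IH] /=; first exact: iff_refl.
exact: iff_trans (iff_next IH) (iff_sym (ax_next_neg _)).
Qed.

Lemma nx_box k a : der (Iff (iter k Next (Box a)) (Box (iter k Next a))).
Proof.
elim: k => [|k IH] /=; first exact: iff_refl.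
exact: iff_trans (iff_next IH) (iff_sym (ax_H _)).
Qed.

Lemma Nf_equiv a k : der (Iff (iter k Next a) (emb (Nf a k))).
Proof.
elim: a k => [p|b IHb c IHc|b IHb|b IHb|b IHb] k /=.
- exact: iff_refl.
- exact: iff_trans (nx_and _ _ _) (iff_and (IHb k) (IHc k)).
- exact: iff_trans (nx_neg _ _) (iff_neg (IHb k)).
- exact: iff_trans (nx_box _ _) (iff_box (IHb k)).
- by rewrite -iterSr; exact: IHb.
Qed.

End Logic.

Theorem mainTheorem8 (PV : Type) (hPV : inhabited PV) (phi : form PV) :
  (wK4H phi <->
   (forall (W : finType) (R : W -> W -> Prop) (f : W -> W),
      inv_dyn_wK4_frame R f -> frame_valid R f phi)) /\
  ((forall (W : finType) (R : W -> W -> Prop) (f : W -> W),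
      inv_dyn_wK4_frame R f -> frame_valid R f phi) <->
   (forall (X : finType) (opens : (X -> Prop) -> Prop) (f : X -> X),
      is_topology opens -> homeomorphism opens f -> dts_valid opens f phi)).
Proof.
have sound : forall a : form PV, wK4H a -> forall (W : Type) (R : W -> W -> Prop) (f : W -> W),
    inv_dyn_wK4_frame R f -> frame_valid R f a.
  move=> a H W R f [_ [wt [fb fR]]] val w; exact: (@soundness PV W R f val wt fb fR a H w).
split; last by split; [apply: ii_to_iii|apply: iii_to_ii].
split; first by move=> H W R f; apply: sound.
move=> Hii; apply: NNPP => nder; case: hPV => p0.
pose psi0 := Nf phi 0.
have E : wK4H (Iff phi (emb psi0)) := Nf_equiv phi 0.
have ne : ~ wK4H (emb psi0).
  by move=> h; apply: nder; apply: r_mp h; apply: iff_imp; apply: iff_sym.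
have cS : cons p0 (fun b => b = Neg (emb psi0)).
  move=> l hl hn; apply: ne; apply: (taut_mp _ hn) => v; rewrite !peval_imp /= => h.
  apply: NNPP => h'; apply: h; apply/peval_conj; by apply: allP_mono hl => b ->.
have [G [mG SG]] := lindenbaum cS.
have nG : ~ G (emb psi0) by rewrite -(mcs_neg mG); apply: SG.
have nk : ~ ksat (@Rc PV p0) id (@valc PV p0) psi0 (exist _ G mG).
  by rewrite canon_truth //; exact: Nf_nxfree.
have [F [RF [valF [d0 [wtF nkF]]]]] := filtration (@Rc_wt PV p0) nk.
have Hfr := frame2 wtF (nd phi) d0.
have H1 := Hii _ _ _ Hfr (val2 valF (B:=nd phi)) (d0, ord0).
case: Hfr => _ [wt2 [fb2 fR2]].
have H2 := soundness (val2 valF (B:=nd phi)) wt2 fb2 fR2 (iff_imp E) (d0, ord0).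
move: H2; rewrite ksat_Imp => /(_ H1).
rewrite layer_truth //; first exact: Nf_nxfree.
exact: Nf_bnd.
Qed.
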